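(* Let $2\leq r\leq n$ be integers and $(s_2,\ldots,s_r)\in\mathbb{N}^{r-1}$. Then there exists an integer $N$ (depending on $n$ and $(s_2,\ldots,s_r)$) such that $\overline{H}_n(s_1,s_2,\ldots,s_r)$ is not an integer for every positive integer $s_1>N$.
   Context: $\mathbb{N}$ is the set of positive integers and $\overline{H}_n(s_1,\ldots,s_r)=\sum_{0\leq k_1<\cdots<k_r\leq n-1}\prod_{j=1}^r (2k_j+1)^{-s_j}$. *)

(* Defs.v *)
From mathcomp Require Import all_boot all_order all_algebra.
Set Implicit Arguments. Unset Strict Implicit. Unset Printing Implicit Defensive.
Import Order.TTheory GRing.Theory Num.Theory.
Local Open Scope ring_scope.

Definition Hbar (n : nat) (s : seq nat) : rat :=
  \sum_(k : (size s).-tuple 'I_n | sorted ltn (map val k))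
     \prod_(j < size s) (((2 * tnth k j).+1)%:R ^- (nth 0%N s j)).

(* Main.v *)
Require Import Defs.
From mathcomp Require Import all_boot all_order all_algebra.
From mathcomp Require Import lra zify.
Import Order.TTheory GRing.Theory Num.Theory.
Local Open Scope ring_scope.

Lemma fac_bounds (a e : nat) : 0 < ((a.+1)%:R ^- e : rat) /\ ((a.+1)%:R ^- e : rat) <= 1.
Proof.
split; first by rewrite invr_gt0 exprn_gt0 // ltr0Sn.
by rewrite invf_le1 ?exprn_gt0 ?ltr0Sn // exprn_ege1 // ler1n.
Qed.

Lemma tnth_val (r n : nat) (k : r.-tuple 'I_n) (i : 'I_r) :
  val (tnth k i) = nth 0%N (map val k) i.
Proof.
by rewrite (tnth_nth (tnth k i)) (nth_map (tnth k i)) // size_tuple.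
Qed.

Lemma size_mkt (n r c : nat) : size (map (@inord n) (iota c r)) == r.
Proof. by rewrite size_map size_iota. Qed.

Definition mkt (n r c : nat) : r.-tuple 'I_n.+1 := Tuple (size_mkt n r c).

Lemma mkt_val (n r c : nat) : (c + r <= n.+1)%N -> map val (mkt n r c) = iota c r.
Proof.
move=> h; rewrite /= -map_comp; rewrite -{2}(map_id (iota c r)); apply/eq_in_map => x.
rewrite mem_iota => /andP [_ hx] /=; rewrite inordK //; lia.
Qed.

Lemma Hbar_split n s1 s' : Hbar n (s1 :: s') =
  \sum_(k : (size s').+1.-tuple 'I_n | sorted ltn (map val k))
    (((2 * tnth k ord0).+1)%:R ^- s1 *
     \prod_(i < size s') (((2 * tnth k (lift ord0 i)).+1)%:R ^- nth 0%N s' i)).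
Proof. rewrite /Hbar /=; apply: eq_bigr => k _; by rewrite big_ord_recl. Qed.

Lemma prod01 (I : Type) (r : seq I) (P : pred I) (F : I -> rat) :
  (forall i, P i -> 0 < F i /\ F i <= 1) ->
  0 < \prod_(i <- r | P i) F i /\ \prod_(i <- r | P i) F i <= 1.
Proof.
move=> h; apply: (big_ind (fun x => 0 < x /\ x <= 1)); last exact: h.
  by split; lra.
move=> x y [x0 x1] [y0 y1]; split; first exact: mulr_gt0.
by apply: mulr_ile1 => //; apply: ltW.
Qed.

Lemma sorted_full (r n : nat) (k : r.-tuple 'I_n) : r = n ->
  sorted ltn (map val k) -> map val k = iota 0 r.
Proof.
move=> e; subst r => hs.
have hu : uniq (map val k) by apply: (sorted_uniq ltn_trans ltnn).
have sub : {subset map val k <= iota 0 n}.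
  by move=> x /mapP [y _ ->]; rewrite mem_iota /= add0n ltn_ord.
have hsz : (size (iota 0 n) <= size (map val k))%N by rewrite size_iota size_map size_tuple.
have [_ heq] := uniq_min_size hu sub hsz.
exact: (irr_sorted_eq ltn_trans ltnn hs (iota_ltn_sorted 0 n) heq).
Qed.

Theorem lemma2p8 (n : nat) (s' : seq nat) :
  (1 <= size s')%N -> ((size s').+1 <= n)%N ->
  all (fun x => 0 < x)%N s' ->
  exists N : nat, forall s1 : nat, (N < s1)%N ->
    ~ (exists z : int, Hbar n (s1 :: s') = z%:~R).
Proof.
move=> hs hr hpos.
case: n hr => [|n] hr; first by [].
have spos : (0 < nth 0%N s' 0)%N by apply: (allP hpos); exact: mem_nth.
pose c := fun (k : (size s').+1.-tuple 'I_n.+1) =>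
  \prod_(i < size s') (((2 * tnth k (lift ord0 i)).+1)%:R ^- nth 0%N s' i) : rat.
have cb : forall k, 0 < c k /\ c k <= 1.
  by move=> k; apply: prod01 => i _; apply: fac_bounds.
case: (ltnP (size s') n) => hlt.
- pose P := fun (k : (size s').+1.-tuple 'I_n.+1) => sorted ltn (map val k).
  pose A := \sum_(k : (size s').+1.-tuple 'I_n.+1 | P k && (val (tnth k ord0) == 0%N)) c k.
  pose B := fun s1 => \sum_(k : (size s').+1.-tuple 'I_n.+1 | P k && (val (tnth k ord0) != 0%N))
     (((2 * tnth k ord0).+1)%:R ^- s1 * c k).
  have HAB s1 : Hbar n.+1 (s1 :: s') = A + B s1.
    rewrite Hbar_split (bigID (fun k : (size s').+1.-tuple 'I_n.+1 => val (tnth k ord0) == 0%N)) /=.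
    congr (_ + _).
    apply: eq_bigr => k /andP [_ /eqP ->].
    by rewrite muln0 mulr1n expr1n invr1 mul1r.
  have Bpos s1 : 0 < B s1.
    have hv : map val (mkt n (size s').+1 1) = iota 1 (size s').+1 by apply: mkt_val; lia.
    have hk1 : P (mkt n (size s').+1 1) && (val (tnth (mkt n (size s').+1 1) ord0) != 0%N).
      by rewrite /P hv iota_ltn_sorted tnth_val hv.
    rewrite /B (bigD1 (mkt n (size s').+1 1)) /=; last exact: hk1.
    have t1 : 0 < ((2 * tnth (mkt n (size s').+1 1) ord0).+1)%:R ^- s1 * c (mkt n (size s').+1 1).
      by apply: mulr_gt0; [apply: (fac_bounds _ _).1 | apply: (cb _).1].
    have t2 : 0 <= \sum_(k | (P k && (val (tnth k ord0) != 0%N)) && (k != mkt n (size s').+1 1))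
        (((2 * tnth k ord0).+1)%:R ^- s1 * c k).
      apply: sumr_ge0 => k _; apply: ltW.
      by apply: mulr_gt0; [apply: (fac_bounds _ _).1 | apply: (cb _).1].
    lra.
  pose M := #|{: (size s').+1.-tuple 'I_n.+1}|.
  have Bbound s1 : (0 < s1)%N -> B s1 <= M%:R * ((3 ^ s1)%:R)^-1.
    move=> s1pos.
    rewrite /B; apply: (@le_trans _ _ (\sum_(k : (size s').+1.-tuple 'I_n.+1) ((3 ^ s1)%:R)^-1)).
      rewrite [X in X <= _]big_mkcond /=; apply: ler_sum => k _.
      case: ifP => [/andP [_ hk0]|_]; last by apply: ltW; rewrite invr_gt0 ltr0n expn_gt0.
      have [c0 c1] := cb k. have [x0 x1] := fac_bounds (2 * tnth k ord0) s1.
      apply: (@le_trans _ _ (((2 * tnth k ord0).+1)%:R ^- s1 * 1)).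
        by apply: ler_wpM2l => //; apply: ltW.
      rewrite mulr1 -natrX lef_pV2 ?posrE ?ltr0n ?expn_gt0 // ler_nat leq_exp2r //; lia.
    by rewrite sumr_const mulr_natl.
  pose m := Num.floor A.
  have f1 : m%:~R <= A := floor_le_tmp A.
  have f2 : A < m%:~R + 1 by have := lt_succ_floor A; rewrite intrD.
  pose eps := m%:~R + 1 - A.
  have epos : 0 < eps by rewrite /eps; lra.
  have hge : 0 <= M%:R / eps by apply: divr_ge0; [exact: ler0n | exact: ltW].
  exists (Num.Def.archi_bound (M%:R / eps)) => s1 hs1 [z hz].
  rewrite HAB in hz.
  have hb := archi_boundP hge.
  have hN : (Num.Def.archi_bound (M%:R / eps) < 3 ^ s1)%N.
    exact: (ltn_trans hs1 (ltn_expl _ (isT : (1 < 3)%N))).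
  have h3 : M%:R / eps < (3 ^ s1)%:R.
    by apply: (lt_trans hb); rewrite ltr_nat.
  rewrite ltr_pdivrMr // in h3.
  have s1pos : (0 < s1)%N by lia.
  have hB : B s1 < eps.
    apply: (le_lt_trans (Bbound s1 s1pos)).
    by rewrite ltr_pdivrMr ?ltr0n ?expn_gt0 // mulrC.
  have hBp := Bpos s1.
  have z1 : m%:~R < z%:~R :> rat by rewrite -hz; lra.
  have z2 : z%:~R < (m + 1)%:~R :> rat by rewrite intrD -hz; rewrite /eps in hB; lra.
  rewrite !ltr_int in z1 z2; lia.
- exists 0%N => s1 _ [z hz].
  have en : (size s').+1 = n.+1 by lia.
  pose k0 := mkt n (size s').+1 0.
  have hv : map val k0 = iota 0 (size s').+1 by apply: mkt_val; lia.
  rewrite Hbar_split (bigD1 k0) in hz; last by rewrite hv iota_ltn_sorted.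
  rewrite [\sum_(i | _ && (i != k0)) _]big1 in hz; last first.
    move=> k /andP [hk hne]; exfalso; move/eqP: hne; apply.
    apply: val_inj; apply: (inj_map val_inj).
    by rewrite hv; apply: sorted_full.
  have t0 : val (tnth k0 ord0) = 0%N by rewrite tnth_val hv.
  rewrite t0 muln0 mulr1n expr1n invr1 mul1r in hz.
  rewrite /= addr0 in hz.
  pose i0 := Ordinal hs : 'I_(size s').
  have [r0 r1] : 0 < \prod_(i < size s' | i != i0)
       (((2 * tnth k0 (lift ord0 i)).+1)%:R ^- nth 0%N s' i) :> rat /\
     \prod_(i < size s' | i != i0)
       (((2 * tnth k0 (lift ord0 i)).+1)%:R ^- nth 0%N s' i) <= 1 :> rat.
    by apply: prod01 => i _; apply: fac_bounds.
  have t1 : val (tnth k0 (lift ord0 i0)) = 1%N by rewrite tnth_val hv nth_iota.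
  have [g0 _] := fac_bounds 2 (nth 0%N s' 0).
  have g1 : (3%:R ^- nth 0%N s' 0 : rat) < 1.
    rewrite invf_lt1 ?exprn_gt0 ?ltr0n // exprn_egt1 ?ltr1n //; lia.
  rewrite (bigD1 i0) //= t1 in hz.
  have z0 : 0%:~R < z%:~R :> rat by rewrite -hz; apply: mulr_gt0.
  have z1 : z%:~R < 1%:~R :> rat by rewrite -hz; nra.
  rewrite !ltr_int in z0 z1; lia.
Qed.
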